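(* Let $\mathfrak R$ be either a cubical iterated graph system $\mathfrak R\subseteq\mathfrak R(d_*,L_*,s_* )$ with $d_*\ge2$, or the pentagonal Sierpiński carpet iterated graph system, with replacement graphs $G_m$. Then for every $M>0$ there exist $m\in\mathbb N$ and a type $t$ such that the family $\Theta_t^{(m)}$ of all paths in $G_m$ from $I_{t,-}^{(m)}$ to $I_{t,+}^{(m)}$ contains at least $M$ pairwise (vertex-)disjoint paths.
   Context: Graphs: $(V,E)$, $V$ finite non-empty, $E\subseteq V\times V$, $(x,y)\in E\Rightarrow(y,x)\notin E$; $\{x,y\}\in E$ means either orientation; a path is a sequence $[x_1,\dots,x_k]$ with $\{x_i,x_{i+1}\}\in E$; a path from $A$ to $B$ has $x_1\in A$, $x_k\in B$. An iterated graph system (IGS) $\mathfrak R$: connected graph $G_1=(S,E)$, finite type set $\mathcal T$, surjective typing $\mathfrak t:E\to\mathcal T$, non-empty gluing rules $I_t\subseteq S\times S$; $I_{t,+}$, $I_{t,-}$ are the sets of first, resp. second, coordinates of $I_t$ and $I^{(m)}_{t,\star}=(I_{t,\star})^m\subseteq W_m$. With $W_m=S^m$, $[w]_k=w_1\cdots w_k$, replacement graphs $G_m=(W_m,E_m)$: $(w,v)\in E_{m+1}$ iff (1) $[w]_m=[v]_m$ and $(w_{m+1},v_{m+1})\in E$ (type $\mathfrak t(w_{m+1},v_{m+1})$), or (2) $([w]_m,[v]_m)\in E_m$ and $(w_{m+1},v_{m+1})\in I_{\mathfrak t([w]_m,[v]_m)}$ (type $\mathfrak t([w]_m,[v]_m)$).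 Mapping of IGS $\varphi:\mathfrak R\to\mathfrak R'$: graph mapping $G_1\to G_1'$ (edges to edges or collapsed) with (i) if $\varphi(w_1)=\varphi(v_1)$ for an edge of type $t$ then $\varphi(w_2)=\varphi(v_2)$ for all $(w_2,v_2)\in I_t$; (ii) if $(w_1,v_1)\in E$ of type $t$ and $(\varphi(w_1),\varphi(v_1))\in E'$ of type $t'$ then $(\varphi(w_2),\varphi(v_2))\in I'_{t'}$ for $(w_2,v_2)\in I_t$; (iii) if $(w_1,v_1)\in E$ of type $t$ and $(\varphi(v_1),\varphi(w_1))\in E'$ of type $t'$ then $(\varphi(v_2),\varphi(w_2))\in I'_{t'}$ for $(w_2,v_2)\in I_t$. Isomorphism of IGS: graph isomorphism with it and its inverse mappings of IGS; sub-system: $S\subseteq S'$, same types, inclusion a mapping of IGS. Cubical IGS: for integers $d_*\ge1,s_*\ge1,L_*\ge3$, $\mathfrak R(d_*,L_*,s_* )$ has symbols $\{1,\dots,L_*\}^{d_*}\times\{\underline1,\dots,\underline{s_*}\}$ with coordinates $c_i$, sheet $s$; types $t_1,\dots,t_{d_*}$; $(w,v)$ edge of type $t_j$ iff $c_i(v)=c_i(w)$ ($i\neq j$), $c_j(v)=c_j(w)+1$; $(w,v)\in I_{t_j}$ iff $c_i(w)=c_i(v)$ ($i\neq j$), $(c_j(w),c_j(v))=(L_*,1)$, $s(w)=s(v)$. Sheet- and other-coordinate-preserving maps: $\eta_j:c_j\mapsto L_*+1-c_j$; $\alpha^+_{j,k}$ ($j\ne k$) swaps $c_j,c_k$; $\alpha^-_{j,k}$: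 $c_k\mapsto L_*+1-c_j$, $c_j\mapsto L_*+1-c_k$; $\mathcal G$ the set of these. A cubical IGS is a sub-system $\mathfrak R\subseteq\mathfrak R(d_*,L_*,s_* )$ with (C1) for each $j$, every symbol with $c_i\in\{1,L_*\}$ ($i\ne j$) and sheet $\underline1$ (condition $(\ast_j)$) is in $S(\mathfrak R)$; (C2) if $w,v$ satisfy $(\ast_j)$, agree off coordinate $j$, and $c_j(v)=c_j(w)+1$, then $(w,v)\in E(\mathfrak R)$; (C3) if $w,v$ satisfy $(\ast_j)$, agree off coordinate $j$, and $(c_j(w),c_j(v))=(L_*,1)$, then $(w,v)\in I_{t_j}(\mathfrak R)$; (C4) each $\alpha\in\mathcal G$ restricts to an isomorphism of IGS $\mathfrak R\to\mathfrak R$. Pentagonal Sierpiński carpet: $S=\{0,\dots,4\}$, $E=\{(0,1),(1,2),(2,3),(3,4),(4,0)\}$ of types $a,b,c,d,e$, $I_a=\{(1,0),(2,4)\}$, $I_b=\{(2,1),(3,0)\}$, $I_c=\{(3,2),(4,1)\}$, $I_d=\{(4,3),(0,2)\}$, $I_e=\{(0,4),(1,3)\}$. *)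

(* Defs.v *)
From mathcomp Require Import all_boot.
Set Implicit Arguments. Unset Strict Implicit. Unset Printing Implicit Defensive.

(* Symbols live in a carrier finType X; the symbol set S is the set     *)
(* [isym R] inside X.  [iEt R x y = Some t] means (x,y) in E with type  *)
(* t (this packages E and the typing map t : E -> T).  [iI R t] is the  *)
(* gluing rule I_t, a relation on X.                                    *)
Record igs (X T : finType) := IGS {
  isym : {set X};
  iEt  : X -> X -> option T;
  iI   : T -> rel X }.

Section IGS.
Variables (X T : finType) (R : igs X T).

Definition iE (x y : X) : bool := iEt R x y != None.
Definition iadj (x y : X) : bool := iE x y || iE y x.

Definition is_igs : Prop :=
  isym R != set0 /\
  (forall x y, iE x y -> (x \in isym R) && (y \in isym R)) /\
  (forall x y, iE x y -> ~~ iE y x) /\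
  (forall x y, x \in isym R -> y \in isym R -> connect iadj x y) /\
  (forall t, exists x y, iEt R x y = Some t) /\
  (forall t, exists x y, iI R t x y) /\
  (forall t x y, iI R t x y -> (x \in isym R) && (y \in isym R)).

(* Edge types in G_m, on REVERSED words (head = last letter w_m):       *)
(* rule (1): equal prefixes and (w_{m+1},v_{m+1}) in E;                 *)
(* rule (2): prefixes form an edge of type t and (w_{m+1},v_{m+1}) in   *)
(*           I_t.                                                        *)
Fixpoint Etw (w v : seq X) : option T :=
  match w, v with
  | a :: w', b :: v' =>
      if w' == v' then iEt R a b
      else match Etw w' v' with
           | Some t => if iI R t a b then Some t else None
           | None => None
           end
  | _, _ => None
  end.

Definition Wm (m : nat) : {set m.-tuple X} :=
  [set w : m.-tuple X | all (fun a => a \in isym R) w].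
Definition Em (m : nat) (w v : m.-tuple X) : bool :=
  Etw (rev w) (rev v) != None.
Definition adjm (m : nat) (w v : m.-tuple X) : bool := Em w v || Em v w.

Definition Iplus (t : T) : pred X := fun x => [exists y, iI R t x y].
Definition Iminus (t : T) : pred X := fun y => [exists x, iI R t x y].
Definition Iword (P : pred X) (m : nat) : pred (m.-tuple X) :=
  fun w => all P w.

Definition gpath (m : nat) (A B : pred (m.-tuple X)) (p : seq (m.-tuple X))
  : bool :=
  if p is x :: p' then
    [&& all (fun w => w \in Wm m) p, A x, path (@adjm m) x p' & B (last x p')]
  else false.

Definition Theta (m : nat) (t : T) (p : seq (m.-tuple X)) : bool :=
  @gpath m (@Iword (Iminus t) m) (@Iword (Iplus t) m) p.

Definition many_disjoint_paths : Prop :=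
  forall M : nat, 0 < M ->
  exists (m : nat) (t : T) (P : 'I_M -> seq (m.-tuple X)),
    (forall i, Theta t (P i)) /\
    (forall i j, i != j -> forall x, x \in P i -> x \notin P j).
End IGS.

Definition igs_mapping (X T X' T' : finType) (R : igs X T) (R' : igs X' T')
  (f : X -> X') : Prop :=
  (forall x, x \in isym R -> f x \in isym R') /\
  (forall x y, iE R x y -> f x = f y \/ iadj R' (f x) (f y)) /\
  (forall x y t, iEt R x y = Some t -> f x = f y ->
     forall a b, iI R t a b -> f a = f b) /\
  (forall x y t t', iEt R x y = Some t -> iEt R' (f x) (f y) = Some t' ->
     forall a b, iI R t a b -> iI R' t' (f a) (f b)) /\
  (forall x y t t', iEt R x y = Some t -> iEt R' (f y) (f x) = Some t' ->
     forall a b, iI R t a b -> iI R' t' (f b) (f a)).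

Definition igs_iso (X T X' T' : finType) (R : igs X T) (R' : igs X' T')
  (f : X -> X') : Prop :=
  exists g : X' -> X,
    igs_mapping R R' f /\ igs_mapping R' R g /\
    (forall x, x \in isym R -> g (f x) = x) /\
    (forall y, y \in isym R' -> f (g y) = y) /\
    (forall x y, x \in isym R -> y \in isym R ->
       iadj R x y = iadj R' (f x) (f y)).

Definition subsystem (X T : finType) (R R' : igs X T) : Prop :=
  isym R \subset isym R' /\ igs_mapping R R' id.

(* Cubical IGS R(d,L,s).  Coordinates are 0-based: the ordinal c : 'I_L *)
(* stands for the coordinate value c+1 in {1..L}; the sheet o : 'I_s   *)
(* stands for \underline{o+1}.  Type t_j is j : 'I_d (0-based).         *)
Definition Sym (d L s : nat) : finType :=
  ({ffun 'I_d -> 'I_L} * 'I_s)%type.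

Section Cube.
Variables d L s : nat.
Implicit Types (w v x : Sym d L s) (j k : 'I_d).

Definition coord x j : nat := val (x.1 j).
Definition agree_off j w v : bool := [forall i, (i != j) ==> (w.1 i == v.1 i)].

Definition cube_Et w v : option 'I_d :=
  [pick j | agree_off j w v && (coord v j == (coord w j).+1)].
Definition cube_I (j : 'I_d) : rel (Sym d L s) := fun w v =>
  [&& agree_off j w v, coord w j == L.-1, coord v j == 0 & w.2 == v.2].
Definition bigcube : igs (Sym d L s) 'I_d :=
  IGS [set: Sym d L s] cube_Et cube_I.

Definition star j x : bool :=
  [forall i, (i != j) ==> ((coord x i == 0) || (coord x i == L.-1))]
  && (val x.2 == 0).

Definition eta j x : Sym d L s :=
  ([ffun i => if i == j then rev_ord (x.1 i) else x.1 i], x.2).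
Definition alphaP j k x : Sym d L s :=
  ([ffun i => if i == j then x.1 k else if i == k then x.1 j else x.1 i], x.2).
Definition alphaM j k x : Sym d L s :=
  ([ffun i => if i == j then rev_ord (x.1 k)
              else if i == k then rev_ord (x.1 j) else x.1 i], x.2).

Definition cubical_igs (R : igs (Sym d L s) 'I_d) : Prop :=
  is_igs R /\ subsystem R bigcube /\
  (forall j x, star j x -> x \in isym R) /\
  (forall j w v, star j w -> star j v -> agree_off j w v ->
     coord v j = (coord w j).+1 -> iE R w v) /\
  (forall j w v, star j w -> star j v -> agree_off j w v ->
     coord w j = L.-1 -> coord v j = 0 -> iI R j w v) /\
  (forall j, igs_iso R R (eta j)) /\
  (forall j k, j != k -> igs_iso R R (alphaP j k)) /\
  (forall j k, j != k -> igs_iso R R (alphaM j k)).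
End Cube.

(* Pentagonal Sierpinski carpet: S = {0..4}, types a..e = 0..4.        *)
Definition pent_Et (x y : 'I_5) : option 'I_5 :=
  if (val x, val y) \in [:: (0,1); (1,2); (2,3); (3,4); (4,0)]
  then Some x else None.
Definition pent_I (t : 'I_5) : rel 'I_5 := fun x y =>
  (val t, val x, val y) \in
    [:: (0,1,0); (0,2,4);
        (1,2,1); (1,3,0);
        (2,3,2); (2,4,1);
        (3,4,3); (3,0,2);
        (4,0,4); (4,1,3)].
Definition pentagon : igs 'I_5 'I_5 := IGS [set: 'I_5] pent_Et pent_I.

(* Main.v *)
Require Import Defs.
From mathcomp Require Import all_boot.
Set Implicit Arguments. Unset Strict Implicit. Unset Printing Implicit Defensive.

Module Aux.

Section L.
Variable A : eqType.
Implicit Types P Q : seq (seq A).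
Lemma headc (d : seq A) P Q : P != [::] -> head d (P ++ Q) = head d P.
Proof. by case: P. Qed.
Lemma lastc (d : seq A) P Q : Q != [::] -> last d (P ++ Q) = last d Q.
Proof. by case: Q => // x Q _; rewrite last_cat. Qed.
Lemma head_mapc a P : P != [::] -> head [::] (map (cons a) P) = a :: head [::] P.
Proof. by case: P. Qed.
Lemma last_mapc a P : P != [::] -> last [::] (map (cons a) P) = a :: last [::] P.
Proof. by case: P => // x P _ /=; rewrite last_map. Qed.
Lemma head_revm (f : A -> A) P : P != [::] ->
  head [::] (rev (map (map f) P)) = map f (last [::] P).
Proof.
case/lastP: P => // P x _; by rewrite map_rcons rev_rcons last_rcons.
Qed.
Lemma last_revm (f : A -> A) P : P != [::] ->
  last [::] (rev (map (map f) P)) = map f (head [::] P).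
Proof. by case: P => // x P _; rewrite /= rev_cons last_rcons. Qed.
Lemma ne_cat P Q : P != [::] -> P ++ Q != [::].
Proof. by case: P. Qed.
Lemma ne_mapc a P : P != [::] -> map (cons a) P != [::].
Proof. by case: P. Qed.
Lemma ne_revm (f : A -> A) P : P != [::] -> rev (map (map f) P) != [::].
Proof. by move=> H; rewrite -size_eq0 size_rev size_map size_eq0. Qed.
Lemma all2_map_same (B : Type) (r : rel A) (g h : B -> A) s :
  (forall b, r (g b) (h b)) -> all2 r (map g s) (map h s).
Proof. by move=> H; elim: s => //= b s ->; rewrite H. Qed.
End L.

Section Gen.
Variables (X T : finType) (R : igs X T).

Definition Aw (w v : seq X) :=
  (Etw R (rev w) (rev v) != None) || (Etw R (rev v) (rev w) != None).

Lemma Etw_size W V : Etw R W V != None -> size W = size V.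
Proof.
elim: W V => [|a W IH] [|b V] //=.
case: (W =P V) => [->//|_]; case E: (Etw R W V) => [t|] //= _.
by rewrite (IH V) // E.
Qed.

Lemma Etw_copy W V a : Etw R W V != None ->
  Etw R (rcons W a) (rcons V a) = Etw R W V.
Proof.
elim: W V => [|x W IH] [|y V] //= H.
rewrite eqseq_rcons eqxx andbT.
case: (W =P V) => // Hne.
have HWV : Etw R W V != None.
  by move: H; case: (W =P V) => // _; case: (Etw R W V).
by rewrite IH.
Qed.

Lemma Etw_jump W V a b t : iEt R a b = Some t -> a != b ->
  all2 (iI R t) W V -> Etw R (rcons W a) (rcons V b) = Some t.
Proof.
move=> Hab ab; elim: W V => [|x W IH] [|y V] //= /andP[Hxy Hall].
by rewrite eqseq_rcons (negbTE ab) andbF IH // Hxy.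
Qed.

Lemma all2_rev (S U : Type) (r : S -> U -> bool) w v :
  all2 r (rev w) (rev v) = all2 r w v.
Proof.
rewrite !all2E !size_rev; case: eqP => //= Hs.
by rewrite -rev_zip // all_rev.
Qed.

Lemma Aw_sym w v : Aw w v = Aw v w.
Proof. by rewrite /Aw orbC. Qed.

Lemma Aw_size w v : Aw w v -> size w = size v.
Proof.
by case/orP => /Etw_size; rewrite !size_rev // => ->.
Qed.

Lemma Aw_copy a w v : Aw w v -> Aw (a :: w) (a :: v).
Proof.
rewrite /Aw !rev_cons => /orP[H|H]; apply/orP; [left|right];
  by rewrite Etw_copy.
Qed.

Lemma Aw_jump a b t w v : iEt R a b = Some t -> a != b ->
  all2 (iI R t) w v -> Aw (a :: w) (b :: v).
Proof.
move=> Hab ab Hall; rewrite /Aw !rev_cons (Etw_jump Hab ab) //.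
by rewrite all2_rev.
Qed.

Lemma Aw_jumpr a b t w v : iEt R b a = Some t -> a != b ->
  all2 (iI R t) v w -> Aw (a :: w) (b :: v).
Proof.
by move=> Hab ab Hall; rewrite Aw_sym; apply: (Aw_jump Hab); rewrite // eq_sym.
Qed.

Lemma sorted_copy a P : sorted Aw P -> sorted Aw (map (cons a) P).
Proof. by rewrite sorted_map; apply: sub_sorted => w v; apply: Aw_copy. Qed.

Lemma sorted_rev P : sorted Aw P -> sorted Aw (rev P).
Proof. by rewrite rev_sorted; apply: sub_sorted => w v; rewrite Aw_sym. Qed.

Lemma sorted_cat2 (d : seq X) P Q : P != [::] -> Q != [::] ->
  sorted Aw P -> sorted Aw Q -> Aw (last d P) (head d Q) ->
  sorted Aw (P ++ Q).
Proof.
case: P => [|x P] // _; case: Q => [|y Q] // _ /= HP HQ Hxy.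
by rewrite cat_path HP /= Hxy HQ.
Qed.

Lemma final t (x0 : X) (Pf : seq bool -> seq (seq X)) :
 (forall s, Pf s != [::]) ->
 (forall s, all (fun w => (size w == size s) && all (fun a => a \in isym R) w) (Pf s)) ->
 (forall s, all (Iminus R t) (head [::] (Pf s))) ->
 (forall s, all (Iplus R t) (last [::] (Pf s))) ->
 (forall s, sorted Aw (Pf s)) ->
 (forall s s', size s = size s' -> s != s' -> forall w, w \in Pf s -> w \notin Pf s') ->
 many_disjoint_paths R.
Proof.
move=> Hne Hall Hmin Hplus Hsort Hdisj M M0.
exists M, t.
pose oh (i : 'I_M) := mkseq (fun k => k == val i) M.
have soh i : size (oh i) = M by rewrite size_mkseq.
pose tup (w : seq X) : M.-tuple X := insubd (nseq_tuple M x0) w.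
have valK i w : w \in Pf (oh i) -> val (tup w) = w.
  move=> Hw; rewrite /tup insubdK // unfold_in /=.
  by have /allP/(_ w Hw)/andP[/eqP -> _] := Hall (oh i); rewrite soh.
exists (fun i => map tup (Pf (oh i))); split.
- move=> i; rewrite /Theta /gpath.
  have := Hne (oh i); have := Hall (oh i); have := Hmin (oh i).
  have := Hplus (oh i); have := Hsort (oh i); have := valK i.
  case: (Pf (oh i)) => [|p ps] // vK Hs Hp Hm Ha _.
  have vKp : val (tup p) = p by apply: vK; rewrite inE eqxx.
  apply/and4P; split.
  + apply/andP; split.
      by rewrite /Wm inE vKp; move/allP: Ha => /(_ p (mem_head _ _))/andP[].
    apply/allP => x /mapP [w Hw ->]; rewrite /Wm inE.
    have Hw' : w \in p :: ps by rewrite inE Hw orbT.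
    by rewrite vK //; move/allP: Ha => /(_ w Hw')/andP[].
  + by rewrite /Iword vKp.
  + rewrite path_map; apply: (sub_in_path (P := fun w => w \in p :: ps)) Hs.
      move=> w v Hw Hv /=; rewrite /adjm /Em.
      by rewrite (vK w Hw) (vK v Hv).
    by apply/allP.
  + rewrite /Iword last_map (vK (last p ps)) //.
    exact: mem_last.
- move=> i j ij x /mapP [w Hw ->]; apply/mapP => [[v Hv Heq]].
  have wv : w = v by rewrite -(valK i w Hw) -(valK j v Hv) Heq.
  have : oh i != oh j.
    apply: contra ij => /eqP E.
    have := congr1 (fun s => nth false s i) E.
    rewrite /oh !nth_mkseq // eqxx => /esym /eqP.
    by move=> H; apply/eqP/val_inj.
  move=> ne; move: (Hdisj _ _ (etrans (soh i) (esym (soh j))) ne w Hw).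
  by rewrite wv Hv.
Qed.

Definition fl (Q : seq (seq X)) (ls : seq X) := flatten [seq map (cons a) Q | a <- ls].

Lemma fl_cons Q a ls : fl Q (a :: ls) = map (cons a) Q ++ fl Q ls.
Proof. by []. Qed.

Lemma fl_head Q a ls : Q != [::] -> head [::] (fl Q (a :: ls)) = a :: head [::] Q.
Proof. by move=> Qn; rewrite fl_cons headc ?ne_mapc // head_mapc. Qed.

Lemma fl_last Q a ls : Q != [::] -> last [::] (fl Q (a :: ls)) = last a ls :: last [::] Q.
Proof.
move=> Qn; elim: ls a => [|b ls IH] a.
  by rewrite fl_cons cats0 last_mapc.
by rewrite fl_cons lastc ?IH // fl_cons; apply: ne_cat; apply: ne_mapc.
Qed.

Lemma fl_ne Q a ls : Q != [::] -> fl Q (a :: ls) != [::].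
Proof. by move=> Qn; rewrite fl_cons; apply/ne_cat/ne_mapc. Qed.

Lemma fl_mem Q ls x w : (x :: w \in fl Q ls) = (x \in ls) && (w \in Q).
Proof.
elim: ls => [|a ls IH] //; rewrite fl_cons mem_cat IH inE.
have -> : (x :: w \in map (cons a) Q) = (x == a) && (w \in Q).
  apply/mapP/andP => [[v Hv [-> ->]]|[/eqP -> Hw]]; first by rewrite eqxx.
  by exists w.
by rewrite andb_orl.
Qed.

Lemma fl_nil Q ls : ([::] \in fl Q ls) = false.
Proof.
elim: ls => [|a ls IH] //; rewrite fl_cons mem_cat IH orbF.
by apply/mapP => [[]].
Qed.

Lemma fl_sorted t a0 ls Q : Q != [::] -> sorted Aw Q ->
  path (fun a b => (iEt R a b == Some t) && (a != b)) a0 ls ->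
  all2 (iI R t) (last [::] Q) (head [::] Q) -> sorted Aw (fl Q (a0 :: ls)).
Proof.
move=> Qn Qs + HI; elim: ls a0 => [|a1 ls IH] a0 /=.
  by rewrite /fl /= cats0 => _; apply: sorted_copy.
case/andP => /andP [/eqP He ne] Hp.
rewrite fl_cons; apply: (sorted_cat2 (d := [::])).
- exact: ne_mapc.
- exact: fl_ne.
- exact: sorted_copy.
- exact: IH.
- rewrite last_mapc // fl_head //; exact: (Aw_jump He).
Qed.
End Gen.

Definition rot (k : nat) (x : 'I_5) : 'I_5 := Ordinal (ltn_pmod (x + k) (isT : 0 < 5)).

Ltac c5 x := case: x => [[|[|[|[|[|?]]]]] ?] //.

Lemma rotE k (Hk : k < 5) x y :
  iEt pentagon (rot k x) (rot k y) == omap (rot k) (iEt pentagon x y).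
Proof.
case: k Hk => [|[|[|[|[|k]]]]] // _; c5 x; c5 y.
Qed.

Lemma rotI k (Hk : k < 5) t x y :
  iI pentagon (rot k t) (rot k x) (rot k y) = iI pentagon t x y.
Proof.
case: k Hk => [|[|[|[|[|k]]]]] // _; c5 t; c5 x; c5 y.
Qed.

Lemma rot_inj k : injective (rot k).
Proof.
move=> x y /(congr1 val) /= /eqP; rewrite eqn_modDr !modn_small // => /eqP.
by move/val_inj.
Qed.

Lemma rot_Etw k (Hk : k < 5) W V :
  Etw pentagon (map (rot k) W) (map (rot k) V) =
  omap (rot k) (Etw pentagon W V).
Proof.
elim: W V => [|a W IH] [|b V] //=.
rewrite (inj_eq (inj_map (@rot_inj k))); case: (W =P V) => _.
  by apply/eqP; apply: (rotE Hk).
rewrite IH; case: (Etw pentagon W V) => [t|] //=.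
by have := rotI Hk t a b; rewrite /= => ->; case: ifP.
Qed.

Lemma rot_Aw k (Hk : k < 5) w v :
  Aw pentagon (map (rot k) w) (map (rot k) v) = Aw pentagon w v.
Proof.
by rewrite /Aw -!map_rev !rot_Etw //; case: (Etw _ _ _); case: (Etw _ _ _).
Qed.

Definition l0 : 'I_5 := @Ordinal 5 0 isT.
Definition l1 : 'I_5 := @Ordinal 5 1 isT.
Definition l2 : 'I_5 := @Ordinal 5 2 isT.
Definition l3 : 'I_5 := @Ordinal 5 3 isT.
Definition l4 : 'I_5 := @Ordinal 5 4 isT.

Fixpoint Pw (s : seq bool) (f : bool) : seq (seq 'I_5) :=
 match s with
 | [::] => [:: [::]]
 | b :: s' => if b (+) f then
     map (cons l4) (rev (map (map (rot 3)) (Pw s' (~~ f)))) ++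
     (map (cons l3) (Pw s' f) ++
      map (cons l2) (rev (map (map (rot 2)) (Pw s' (~~ f)))))
   else map (cons l0) (Pw s' f) ++ map (cons l1) (Pw s' f)
 end.

Definition sl (f b : bool) := if b (+) f then l4 else l0.
Definition el (f b : bool) := if b (+) f then l2 else l1.



Lemma Pw_inv s : forall f,
  [/\ Pw s f != [::],
      head [::] (Pw s f) = map (sl f) s,
      last [::] (Pw s f) = map (el f) s,
      all (fun w => size w == size s) (Pw s f) &
      sorted (Aw pentagon) (Pw s f)].
Proof.
elim: s => [|b s IH] f; first by split.
have [Pn Ph Pl Ps Po] := IH f.
have [Qn Qh Ql Qs Qo] := IH (~~ f).
rewrite [Pw (b :: s) f]/=; case: ifP => bf.
- have An := ne_mapc l4 (ne_revm (rot 3) Qn).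
  have Bn := ne_mapc l3 Pn.
  have Cn := ne_mapc l2 (ne_revm (rot 2) Qn).
  have sr k (Hk : k < 5) : sorted (Aw pentagon) (rev (map (map (rot k)) (Pw s (~~ f)))).
    apply: sorted_rev; rewrite sorted_map; apply: sub_sorted Qo => w v.
    by rewrite /relpre /= (rot_Aw Hk).
  split.
  + exact: ne_cat.
  + rewrite headc ?ne_mapc ?ne_revm // head_mapc ?ne_revm // head_revm // Ql -map_comp /sl /= bf.
    congr (_ :: _); apply: eq_map => c /=; apply: val_inj.
    by rewrite /el /=; case: c; case: (f).
  + rewrite lastc; last exact/ne_cat/ne_mapc.
    rewrite lastc ?ne_mapc ?ne_revm //.
    rewrite last_mapc ?ne_revm // last_revm // Qh -map_comp /el /= bf.
    congr (_ :: _); apply: eq_map => c /=; apply: val_inj.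
    by rewrite /sl /=; case: c; case: (f).
  + rewrite !all_cat; apply/and3P; split; apply/allP => x /mapP [w Hw ->] /=;
      rewrite eqSS.
    * move: Hw; rewrite mem_rev => /mapP [u Hu ->]; rewrite size_map.
      by move/allP: Qs => /(_ u Hu).
    * by move/allP: Ps => /(_ w Hw).
    * move: Hw; rewrite mem_rev => /mapP [u Hu ->]; rewrite size_map.
      by move/allP: Qs => /(_ u Hu).
  + apply: (sorted_cat2 (d := [::])).
    * exact/ne_mapc/ne_revm.
    * exact/ne_cat/ne_mapc.
    * exact/sorted_copy/sr.
    * apply: (sorted_cat2 (d := [::])).
      - exact: ne_mapc.
      - exact/ne_mapc/ne_revm.
      - exact: sorted_copy.
      - exact/sorted_copy/sr.
      rewrite last_mapc // head_mapc ?ne_revm // head_revm // Pl Ql.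
      apply: (@Aw_jumpr _ _ _ _ _ l2) => //.
      rewrite -map_comp; apply: all2_map_same => c /=.
      by rewrite /el; case: c; case: (f).
    * rewrite headc // last_mapc ?ne_revm // last_revm // head_mapc // Ph Qh.
      apply: (@Aw_jumpr _ _ _ _ _ l3) => //.
      rewrite -map_comp; apply: all2_map_same => c /=.
      by rewrite /sl; case: c; case: (f).
- split.
  + exact/ne_cat/ne_mapc.
  + by rewrite headc ?ne_mapc // head_mapc // Ph /sl /= bf.
  + by rewrite lastc ?ne_mapc // last_mapc // Pl /el /= bf.
  + by rewrite all_cat; apply/andP; split; apply/allP => x /mapP [w Hw ->] /=;
      rewrite eqSS; move/allP: Ps => /(_ w Hw).
  + apply: (sorted_cat2 (d := [::])); rewrite ?ne_mapc //; try exact: sorted_copy.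
    rewrite last_mapc // head_mapc // Pl Ph.
    apply: (@Aw_jump _ _ _ _ _ l0) => //.
    apply: all2_map_same => c /=.
    by rewrite /el /sl; case: c; case: (f).
Qed.

Lemma memc (a x : 'I_5) w P : ((x :: w) \in map (cons a) P) = (x == a) && (w \in P).
Proof.
apply/mapP/andP => [[v Hv [-> ->]]|[/eqP -> Hw]]; first by rewrite eqxx.
by exists w.
Qed.

Lemma nilc (a : 'I_5) P : ([::] \in map (cons a) P) = false.
Proof. by apply/mapP => [[]]. Qed.

Lemma memPw b s f x w : (x :: w \in Pw (b :: s) f) =
  if b (+) f then
    [|| (x == l4) && (w \in rev (map (map (rot 3)) (Pw s (~~f)))),
        (x == l3) && (w \in Pw s f) |
        (x == l2) && (w \in rev (map (map (rot 2)) (Pw s (~~f))))]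
  else ((x == l0) || (x == l1)) && (w \in Pw s f).
Proof. by rewrite /=; case: ifP => _; rewrite !mem_cat !memc // andb_orl. Qed.

Lemma nilPw b s f : ([::] \in Pw (b :: s) f) = false.
Proof. by rewrite /=; case: ifP => _; rewrite !mem_cat !nilc. Qed.

Lemma mem_revm k w Q : w \in rev (map (map (rot k)) Q) ->
  exists2 u, u \in Q & w = map (rot k) u.
Proof. by rewrite mem_rev => /mapP. Qed.

Lemma Pw_disj s : forall s' f, size s = size s' -> s != s' ->
  forall w, w \in Pw s f -> w \notin Pw s' f.
Proof.
elim: s => [|b s IH] [|b' s'] f // [Hsz] Hne [|x w]; rewrite ?nilPw // => Hw.
have revd k (Hk : k < 5) g : s != s' -> w \in rev (map (map (rot k)) (Pw s g)) ->
    w \notin rev (map (map (rot k)) (Pw s' g)).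
  move=> ss /mem_revm [u Hu ->]; apply/negP => /mem_revm [u' Hu'].
  move/(inj_map (@rot_inj k)) => E; subst u'.
  by move: (IH s' g Hsz ss u Hu); rewrite Hu'.
rewrite memPw in Hw; rewrite memPw.
case E: (b (+) f) Hw; case E': (b' (+) f).
- have bb : b = b' by move: E E'; case: (b); case: (b'); case: (f).
  subst b'; have ss : s != s' by apply: contra Hne => /eqP ->.
  case/or3P => /andP [/eqP -> H]; rewrite !negb_or /=.
  + by rewrite revd.
  + by rewrite (negbTE (IH s' f Hsz ss w H)).
  + by rewrite revd.
- by case/or3P => /andP [/eqP -> H].
- by case/andP => /orP [] /eqP ->.
- have bb : b = b' by move: E E'; case: (b); case: (b'); case: (f).
  subst b'; have ss : s != s' by apply: contra Hne => /eqP ->.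
  by case/andP => _ H; rewrite (negbTE (IH s' f Hsz ss w H)) andbF.
Qed.

Lemma pent_main : many_disjoint_paths pentagon.
Proof.
apply: (@final _ _ pentagon l0 l0 (fun s => Pw s false)).
- by move=> s; have [] := Pw_inv s false.
- move=> s; have [_ _ _ Hs _] := Pw_inv s false.
  by apply: sub_all Hs => w ->; apply/allP => a _; rewrite inE.
- move=> s; have [_ -> _ _ _] := Pw_inv s false.
  apply/allP => a /mapP [c _ ->]; apply/existsP; rewrite /sl /=.
  by case: c; [exists l2 | exists l1].
- move=> s; have [_ _ -> _ _] := Pw_inv s false.
  apply/allP => a /mapP [c _ ->]; apply/existsP; rewrite /el /=.
  by case: c; [exists l4 | exists l0].
- by move=> s; have [] := Pw_inv s false.
- move=> s s' H1 H2; exact: Pw_disj.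
Qed.

Section Cube2.
Variables (d L' s' : nat) (R : igs (Sym d L'.+1 s'.+1) 'I_d).
Hypotheses (d2 : 1 < d) (L2 : 1 < L') (HR : cubical_igs R).

Let SX := Sym d L'.+1 s'.+1.
Definition t0 : 'I_d := Ordinal (ltnW d2).
Definition t1 : 'I_d := Ordinal d2.

Definition lt (i : nat) (b : bool) : SX :=
  ([ffun k => if k == t0 then inord i else if (k == t1) && b then ord_max else ord0], ord0).

Lemma t01 : t0 != t1. Proof. by []. Qed.

Lemma coord_lt0 i b : i <= L' -> coord (lt i b) t0 = i.
Proof. by move=> H; rewrite /coord ffunE eqxx; apply: inordK. Qed.

Lemma coord_lt i b k : k != t0 -> coord (lt i b) k = if (k == t1) && b then L' else 0.
Proof. by move=> H; rewrite /coord ffunE (negbTE H); case: ifP. Qed.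

Lemma star_lt i b : star t0 (lt i b).
Proof.
apply/andP; split; last by [].
apply/forallP => k; apply/implyP => Hk; rewrite coord_lt //.
by case: ifP => _; rewrite eqxx ?orbT.
Qed.

Lemma agree_lt i j b : agree_off t0 (lt i b) (lt j b).
Proof.
apply/forallP => k; apply/implyP => Hk; rewrite !ffunE (negbTE Hk) //.
Qed.

Lemma lt_b i j b c : lt i b = lt j c -> b = c.
Proof.
move=> E; have := congr1 (fun x => coord x t1) E.
rewrite !coord_lt ?eqxx // => H.
by move: H; case: (b); case: (c) => //= H; move: L2; rewrite ?H // -H.
Qed.

Lemma cube_comps :
  [/\ is_igs R, subsystem R (bigcube d L'.+1 s'.+1),
     (forall j x, star j x -> x \in isym R),
     (forall j w v, star j w -> star j v -> agree_off j w v ->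
       coord v j = (coord w j).+1 -> iE R w v) &
     (forall j w v, star j w -> star j v -> agree_off j w v ->
       coord w j = L'.+1.-1 -> coord v j = 0 -> iI R j w v)].
Proof. by case: HR => [? [? [? [? [? _]]]]]. Qed.

Lemma type_dir x y t : iEt R x y = Some t -> cube_Et x y = Some t.
Proof.
have [Higs [_ Hmap] HC1 HC2 HC3] := cube_comps.
case: Hmap => _ [Hgr [_ [Hii Hiii]]].
move=> Ht.
pose a : SX := ([ffun k => if k == t then ord_max else ord0], ord0).
pose b0 : SX := ([ffun k => ord0], ord0).
have Iab : iI R t a b0.
  apply: HC3.
  - apply/andP; split => //; apply/forallP => k; apply/implyP => Hk.
    by rewrite /coord ffunE (negbTE Hk) eqxx.
  - apply/andP; split => //; apply/forallP => k; apply/implyP => Hk.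
    by rewrite /coord ffunE eqxx.
  - by apply/forallP => k; apply/implyP => Hk; rewrite !ffunE (negbTE Hk).
  - by rewrite /coord ffunE eqxx.
  - by rewrite /coord ffunE.
have Exy : iE R x y by rewrite /iE Ht.
have [exy|] := Hgr x y Exy.
  case: Higs => _ [_ [Hanti _]].
  by have := Hanti x y Exy; rewrite exy in Exy *; rewrite Exy.
rewrite /iadj /iE /=.
case Ec: (cube_Et x y) => [j|] /=.
  have := Hii x y t j Ht Ec a b0 Iab => /= /and4P [Hag Hca Hcb _].
  case: (j =P t) => [-> //|/eqP jt].
  move/forallP: Hag => /(_ t); rewrite eq_sym jt /= !ffunE eqxx => /eqP.
  move/(congr1 val) => /= L0; move: L2; by rewrite L0.
case Ec': (cube_Et y x) => [j|] // _.
have := Hiii x y t j Ht Ec' a b0 Iab => /= /and4P [_ Hc _ _].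
move: Hc; rewrite /coord ffunE /= => /eqP L0; move: L2; by rewrite -L0.
Qed.

Lemma lt_edge i b : i < L' -> iEt R (lt i b) (lt i.+1 b) = Some t0.
Proof.
move=> iL.
have [_ _ _ HC2 _] := cube_comps.
have H := HC2 t0 (lt i b) (lt i.+1 b) (star_lt _ _) (star_lt _ _) (agree_lt _ _ _).
rewrite !coord_lt0 ?(ltnW iL) // in H.
move: (H erefl); rewrite /iE.
case E: (iEt R _ _) => [t|] // _.
have := type_dir E; rewrite /cube_Et.
case: pickP => [j /andP [Hag Hc]|] // [jt]; subst j.
case: (t =P t0) => [-> //|/eqP tt0].
move/forallP: Hag => /(_ t0); rewrite eq_sym tt0 /= !ffunE eqxx => /eqP.
move/(congr1 val); rewrite /= !inordK //; last exact: ltnW.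
by move/n_Sn.
Qed.

Lemma lt_I b : iI R t0 (lt L' b) (lt 0 b).
Proof.
have [_ _ _ _ HC3] := cube_comps.
apply: HC3; rewrite ?star_lt ?agree_lt ?coord_lt0 //.
Qed.

Lemma lt_ne i b : i < L' -> lt i b != lt i.+1 b.
Proof.
move=> iL; apply/eqP => /(congr1 (fun x => coord x t0)).
by rewrite !coord_lt0 // ?(ltnW iL) // => /n_Sn.
Qed.


Fixpoint Pc (sg : seq bool) : seq (seq SX) :=
  match sg with
  | [::] => [:: [::]]
  | b :: sg' => fl (Pc sg') [seq lt i b | i <- iota 0 L'.+1]
  end.

Lemma last_iota n k : last n (iota n.+1 k) = n + k.
Proof. by elim: k n => [|k IH] n /=; rewrite ?addn0 // IH addSnnS. Qed.

Lemma lt_path b n k : n + k <= L' ->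
  path (fun a c => (iEt R a c == Some t0) && (a != c)) (lt n b)
    [seq lt i b | i <- iota n.+1 k].
Proof.
elim: k n => [|k IH] n //= H.
rewrite lt_edge ?lt_ne ?eqxx /=; try by rewrite -addSnnS in H; apply: leq_trans H; rewrite leq_addr.
by apply: IH; rewrite addSnnS.
Qed.

Lemma Pc_inv sg :
  [/\ Pc sg != [::],
      head [::] (Pc sg) = map (lt 0) sg,
      last [::] (Pc sg) = map (lt L') sg,
      all (fun w => (size w == size sg) && all (fun a => a \in isym R) w) (Pc sg) &
      sorted (Aw R) (Pc sg)].
Proof.
have [_ _ HC1 _ _] := cube_comps.
elim: sg => [|b sg [Qn Qh Ql Qs Qo]]; first by split.
rewrite [Pc _]/=.
split.
- exact: fl_ne.
- by rewrite fl_head // Qh.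
- by rewrite fl_last // Ql (last_map (fun i => lt i b) _ 0) last_iota.
- apply/allP => -[|x w]; rewrite ?fl_nil // fl_mem => /andP [Hx Hw] /=.
  move/allP: Qs => /(_ w Hw) /andP [Hs Ha]; rewrite eqSS Hs Ha andbT /=.
  move: Hx; rewrite inE => /orP [/eqP ->|/mapP [i _ ->]]; exact: (HC1 _ _ (star_lt _ _)).
- apply: (fl_sorted (t := t0)) => //.
    by apply: lt_path; rewrite add0n.
  rewrite Qh Ql; apply: all2_map_same => c; exact: lt_I.
Qed.

Lemma Pc_disj sg : forall sg', size sg = size sg' -> sg != sg' ->
  forall w, w \in Pc sg -> w \notin Pc sg'.
Proof.
elim: sg => [|b sg IH] [|b' sg'] // [Hsz] Hne [|x w]; rewrite /= ?fl_nil //.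
rewrite !fl_mem => /andP [Hx Hw]; apply/negP => /andP [Hx' Hw'].
have ex c y : y \in lt 0 c :: [seq lt i c | i <- iota 1 L'] -> exists i, y = lt i c.
  by rewrite inE => /orP [/eqP ->|/mapP [i _ ->]]; eexists.
have bb : b = b'.
  by move: Hx Hx' => /ex [i ->] /ex [j]; apply: lt_b.
subst b'; have ss : sg != sg' by apply: contra Hne => /eqP ->.
by move: (IH sg' Hsz ss w Hw); rewrite Hw'.
Qed.

Lemma cube_main : many_disjoint_paths R.
Proof.
apply: (@final _ _ R t0 (lt 0 false) Pc).
- by move=> sg; have [] := Pc_inv sg.
- by move=> sg; have [] := Pc_inv sg.
- move=> sg; have [_ -> _ _ _] := Pc_inv sg.
  apply/allP => a /mapP [c _ ->]; apply/existsP; exists (lt L' c); exact: lt_I.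
- move=> sg; have [_ _ -> _ _] := Pc_inv sg.
  apply/allP => a /mapP [c _ ->]; apply/existsP; exists (lt 0 c); exact: lt_I.
- by move=> sg; have [] := Pc_inv sg.
- exact: Pc_disj.
Qed.
End Cube2.

Lemma cube_all : forall (d L s : nat) (R : igs (Sym d L s) 'I_d),
  2 <= d -> 3 <= L -> 1 <= s -> cubical_igs R -> many_disjoint_paths R.
Proof.
move=> d [|L'] [|s'] R d2 L3 s1 HR //.
by apply: cube_main HR.
Qed.


End Aux.

Theorem proposition7p4 :
  (forall (d L s : nat) (R : igs (Sym d L s) 'I_d),
     2 <= d -> 3 <= L -> 1 <= s -> cubical_igs R ->
     many_disjoint_paths R) /\
  many_disjoint_paths pentagon.
Proof.
split; [exact: Aux.cube_all | exact: Aux.pent_main].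
Qed.
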